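(* A semiring $S$ is a nil-extension of a rectangular skew-ring if and only if $S$ is a completely Archimedean semiring and $E^+(S)$ is a subsemigroup of $(S,+)$.
   Context: A semiring $(S,+,\cdot)$ has two associative operations with $a(b+c)=ab+ac$, $(b+c)a=ba+ca$. $na$ denotes the $n$-fold sum of $a$. $E^+(S)$ is the set of additive idempotents. $a$ is additively regular if $a=a+x+a$ for some $x$; $a$ is completely regular if there is $x$ with $a=a+x+a$, $a+x=x+a$, $a(a+x)=a+x$; $S$ is quasi completely regular if for each $a$ some $na$ is completely regular. $\mathscr{J}^+$ is Green's $\mathscr{J}$-relation on $(S,+)$. For $a\in S$ let $m(a)$ be the least positive integer with $m(a)a$ additively regular; $a\,\mathscr{J}^{*^{+}}\,b$ iff $m(a)a\,\mathscr{J}^+\,m(b)b$. A completely Archimedean semiring is a quasi completely regular semiring with $\mathscr{J}^{*^{+}}=S\times S$. A completely simple semiring is a semiring all of whose elements are completely regular and with $\mathscr{J}^+=S\times S$. A rectangular skew-ring is a completely simple semiring $K$ with $E^+(K)$ a subsemigroup of $(K,+)$. $S$ is a nil-extension of a subsemiring $K$ if $K$ is a bi-ideal of $S$ (for $a\in K$, $x\in S$: $a+x,x+a,ax,xa\in K$) and for every $a\in S$ some $na\in K$. *)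

(* Defs.v *)
From Stdlib Require Import Arith.

Section SemiringDefs.
Context {T : Type} (add mul : T -> T -> T).

Definition is_semiring : Prop :=
  (forall a b c, add a (add b c) = add (add a b) c) /\
  (forall a b c, mul a (mul b c) = mul (mul a b) c) /\
  (forall a b c, mul a (add b c) = add (mul a b) (mul a c)) /\
  (forall a b c, mul (add b c) a = add (mul b a) (mul c a)).

(* n-fold sum n a, intended for n >= 1: nsum 1 a = a, nsum (k+1) a = nsum k a + a.
   (nsum 0 a = a is a junk value; it is never used, all uses require 0 < n.) *)
Fixpoint nsum (n : nat) (a : T) : T :=
  match n with
  | 0 => a
  | 1 => a
  | S k => add (nsum k a) a
  end.

(* All notions below are relative to a carrier predicate P : T -> Prop
   (a subsemiring); for T itself take P := fun _ => True. *)
Variable P : T -> Prop.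

Definition subsemiring : Prop :=
  forall a b, P a -> P b -> P (add a b) /\ P (mul a b).

Definition add_idem (e : T) : Prop := add e e = e.

Definition Eplus_subsemigroup : Prop :=
  forall e f, P e -> P f -> add_idem e -> add_idem f -> add_idem (add e f).

Definition add_regular (a : T) : Prop :=
  exists x, P x /\ a = add (add a x) a.

Definition completely_regular (a : T) : Prop :=
  exists x, P x /\ a = add (add a x) a /\ add a x = add x a /\
            mul a (add a x) = add a x.

Definition quasi_completely_regular : Prop :=
  forall a, P a -> exists n, 0 < n /\ completely_regular (nsum n a).

(* membership in the principal two-sided ideal P^1 + a + P^1 of (P,+) *)
Definition in_Jideal (a y : T) : Prop :=
  y = a \/ (exists u, P u /\ y = add u a) \/ (exists v, P v /\ y = add a v) \/
  (exists u v, P u /\ P v /\ y = add (add u a) v).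

Definition Jplus (a b : T) : Prop := forall y, in_Jideal a y <-> in_Jideal b y.

Definition is_m (a : T) (m : nat) : Prop :=
  0 < m /\ add_regular (nsum m a) /\
  (forall k, 0 < k -> k < m -> ~ add_regular (nsum k a)).

Definition Jstarplus (a b : T) : Prop :=
  exists m n, is_m a m /\ is_m b n /\ Jplus (nsum m a) (nsum n b).

Definition completely_archimedean : Prop :=
  quasi_completely_regular /\ (forall a b, P a -> P b -> Jstarplus a b).

Definition completely_simple : Prop :=
  (forall a, P a -> completely_regular a) /\ (forall a b, P a -> P b -> Jplus a b).

Definition rectangular_skew_ring : Prop :=
  subsemiring /\ completely_simple /\ Eplus_subsemigroup.

End SemiringDefs.

Definition full {S : Type} : S -> Prop := fun _ => True.

Definition nil_extension {S : Type} (add mul : S -> S -> S) (K : S -> Prop) : Prop :=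
  subsemiring add mul K /\
  (forall a x, K a -> K (add a x) /\ K (add x a) /\ K (mul a x) /\ K (mul x a)) /\
  (forall a, exists n, 0 < n /\ K (nsum add n a)).

(* Main.v *)
Require Import Defs.
From Stdlib Require Import Arith Lia Classical.

Lemma nsum_S {T : Type} (add : T -> T -> T) n a :
  0 < n -> nsum add (S n) a = add (nsum add n a) a.
Proof. intros. destruct n; [lia | reflexivity]. Qed.

Lemma nsum_Sl {T : Type} (add : T -> T -> T)
  (HA : forall a b c, add a (add b c) = add (add a b) c) n a :
  0 < n -> nsum add (S n) a = add a (nsum add n a).
Proof.
  induction n as [|n IH]; intros H; [lia|].
  destruct n as [|m]; [reflexivity|].
  rewrite (nsum_S add (S (S m)) a) by lia.
  rewrite IH at 1 by lia. rewrite (nsum_S add (S m) a) by lia. now rewrite HA.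
Qed.

Lemma nsum_absR {T : Type} (add : T -> T -> T)
  (HA : forall a b c, add a (add b c) = add (add a b) c) b g :
  add b g = b -> forall n, 0 < n -> add (nsum add n b) g = nsum add n b.
Proof.
  intros Hb n. induction n as [|n IH]; intros H; [lia|].
  destruct n as [|m]; [exact Hb|].
  rewrite nsum_S by lia. now rewrite <- HA, Hb.
Qed.

Lemma nsum_absL {T : Type} (add : T -> T -> T)
  (HA : forall a b c, add a (add b c) = add (add a b) c) b g :
  add g b = b -> forall n, 0 < n -> add g (nsum add n b) = nsum add n b.
Proof.
  intros Hb n. induction n as [|n IH]; intros H; [lia|].
  destruct n as [|m]; [exact Hb|].
  rewrite nsum_Sl by (auto; lia). now rewrite HA, Hb.
Qed.

Lemma nsum_idem {T : Type} (add : T -> T -> T) t :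
  add t t = t -> forall n, nsum add n t = t.
Proof.
  intros Ht n. induction n as [|n IH]; [reflexivity|].
  destruct n as [|m]; [reflexivity|].
  rewrite nsum_S by lia. now rewrite IH.
Qed.

Lemma nsum_mul {T : Type} (add mul : T -> T -> T)
  (HD : forall a b c, mul (add b c) a = add (mul b a) (mul c a)) a c :
  forall n, mul (nsum add n a) c = nsum add n (mul a c).
Proof.
  intros n. induction n as [|n IH]; [reflexivity|].
  destruct n as [|m]; [reflexivity|].
  rewrite !nsum_S by lia. now rewrite HD, IH.
Qed.

Lemma least_pos (Q : nat -> Prop) :
  (exists n, 0 < n /\ Q n) -> exists m, 0 < m /\ Q m /\ forall k, 0 < k -> k < m -> ~ Q k.
Proof.
  intros [n [Hn HQ]].
  induction n as [n IH] using lt_wf_ind.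
  destruct (classic (exists k, 0 < k /\ k < n /\ Q k)) as [[k [H1 [H2 H3]]]|Hno].
  - exact (IH k H2 H1 H3).
  - exists n. split; [exact Hn|]. split; [exact HQ|].
    intros k H1 H2 H3. apply Hno. eauto.
Qed.

Lemma reg_m1 {T : Type} (add : T -> T -> T) a m :
  add_regular add full a -> is_m add full a m -> m = 1.
Proof.
  intros Hr [Hm [_ Hmin]]. destruct (Nat.eq_dec m 1) as [E|E]; [exact E|].
  exfalso. apply (Hmin 1); [lia|lia|exact Hr].
Qed.

Lemma Jreg {T : Type} (add : T -> T -> T)
  (HA : forall a b c, add a (add b c) = add (add a b) c) a x y :
  a = add (add a x) a -> in_Jideal add full a y -> exists u v, y = add (add u a) v.
Proof.
  intros Hx [H|[[u [_ H]]|[[v [_ H]]|[u [v [_ [_ H]]]]]]]; subst y.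
  - exists (add a x), (add x a). rewrite <- Hx. rewrite HA. exact Hx.
  - exists u, (add x a). rewrite HA, <- (HA u a x), <- HA, <- Hx. reflexivity.
  - exists (add a x), v. rewrite <- Hx. reflexivity.
  - exists u, v. reflexivity.
Qed.

Lemma F2 {T : Type} (add : T -> T -> T)
  (HA : forall a b c, add a (add b c) = add (add a b) c)
  (JS : forall a b, Jstarplus add full a b) a b :
  add_regular add full a -> add_regular add full b -> exists u v, a = add (add u b) v.
Proof.
  intros Ha Hb. destruct (JS a b) as [m [n [Hm [Hn HJ]]]].
  rewrite (reg_m1 add a m Ha Hm) in HJ. rewrite (reg_m1 add b n Hb Hn) in HJ.
  cbn [nsum] in HJ.
  destruct (HJ a) as [H1 _]. specialize (H1 (or_introl eq_refl)).
  destruct Hb as [x [_ Hx]]. exact (Jreg add HA b x a Hx H1).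
Qed.

Lemma prim {T : Type} (add mul : T -> T -> T)
  (HA : forall a b c, add a (add b c) = add (add a b) c)
  (QCR : quasi_completely_regular add mul full)
  (JS : forall a b, Jstarplus add full a b) e h :
  add e e = e -> add h h = h -> add e h = h -> add h e = h -> e = h.
Proof.
  intros He Hh Heh Hhe.
  assert (Re : add_regular add full e) by (exists e; split; [exact I|now rewrite !He]).
  assert (Rh : add_regular add full h) by (exists h; split; [exact I|now rewrite !Hh]).
  destruct (F2 add HA JS e h Re Rh) as [u [v Huv]].
  assert (X : add (add e (add (add u h) v)) e = e) by (rewrite <- Huv; now rewrite !He).
  set (u' := add (add e u) h). set (v' := add (add h v) e).
  assert (E1 : e = add u' v').
  { transitivity (add (add e (add (add u h) v)) e); [symmetry; exact X|].
    unfold u', v'. rewrite !HA. rewrite <- (HA (add e u) h h), Hh. reflexivity. }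
  assert (Fv : add e v' = v') by (unfold v'; rewrite !HA, Heh; reflexivity).
  assert (Fu : add u' h = u') by (unfold u'; rewrite <- HA, Hh; reflexivity).
  assert (En : forall n, 0 < n -> e = add (nsum add n u') (nsum add n v')).
  { intros n. induction n as [|n IH]; intros Hn; [lia|].
    destruct n as [|n]; [exact E1|].
    rewrite (nsum_Sl add HA (S n) u') by lia. rewrite (nsum_S add (S n) v') by lia.
    transitivity (add (add u' (add (nsum add (S n) u') (nsum add (S n) v'))) v');
      [|rewrite !HA; reflexivity].
    rewrite <- IH by lia. rewrite <- HA, Fv. exact E1. }
  destruct (QCR u' I) as [n [Hn [y [_ [H1 [H2 H3]]]]]].
  set (U := nsum add n u') in *.
  set (k := add U y).
  assert (kU : add k U = U) by (unfold k; symmetry; exact H1).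
  assert (ke : add k e = e).
  { pose proof (En n Hn) as E. fold U in E.
    assert (Z : add k (add U (nsum add n v')) = add U (nsum add n v'))
      by (rewrite HA, kU; reflexivity).
    rewrite <- E in Z. exact Z. }
  assert (Uh : add U h = U) by (apply (nsum_absR add HA); assumption).
  assert (kh : add k h = k) by (unfold k; rewrite H2, <- HA, Uh; reflexivity).
  assert (hk : h = k).
  { rewrite <- Heh. rewrite <- ke at 1. rewrite <- HA, Heh. exact kh. }
  rewrite <- ke. rewrite <- hk. exact Hhe.
Qed.

Lemma Hg {T : Type} (add mul : T -> T -> T)
  (HA : forall a b c, add a (add b c) = add (add a b) c)
  (QCR : quasi_completely_regular add mul full)
  (JS : forall a b, Jstarplus add full a b) g c :
  add g g = g ->
  exists r r', add (add (add g c) g) r = g /\ add r' (add (add g c) g) = g.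
Proof.
  intros Hgg.
  assert (gb : add g (add (add g c) g) = add (add g c) g) by (rewrite !HA, Hgg; reflexivity).
  assert (bg : add (add (add g c) g) g = add (add g c) g) by (rewrite <- HA, Hgg; reflexivity).
  generalize dependent (add (add g c) g). intros b gb bg.
  destruct (QCR b I) as [n [Hn [z [_ [H1 [H2 H3]]]]]].
  pose proof (nsum_absL add HA b g gb n Hn) as gB.
  pose proof (nsum_absR add HA b g bg n Hn) as Bg.
  assert (hh : add (add (nsum add n b) z) (add (nsum add n b) z) = add (nsum add n b) z)
    by (rewrite HA, <- H1; reflexivity).
  assert (gh : add g (add (nsum add n b) z) = add (nsum add n b) z) by (rewrite HA, gB; reflexivity).
  assert (hg : add (add (nsum add n b) z) g = add (nsum add n b) z)
    by (rewrite H2, <- HA, Bg; reflexivity).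
  pose proof (prim add mul HA QCR JS g _ Hgg hh gh hg) as E.
  destruct n as [|m]; [lia|]. destruct m as [|m].
  - cbn [nsum] in *. exists z, z. split; [symmetry; exact E|]. rewrite <- H2. symmetry; exact E.
  - exists (add (nsum add (S m) b) z), (add z (nsum add (S m) b)). split.
    + rewrite HA, <- (nsum_Sl add HA) by lia. symmetry; exact E.
    + rewrite <- HA, <- (nsum_S add) by lia. rewrite <- H2. symmetry; exact E.
Qed.

Lemma Rstab {T : Type} (add mul : T -> T -> T)
  (HA : forall a b c, add a (add b c) = add (add a b) c)
  (QCR : quasi_completely_regular add mul full)
  (JS : forall a b, Jstarplus add full a b) c x s :
  c = add (add c x) c -> exists t, c = add (add c s) t.
Proof.
  intros Hx.
  assert (ff : add (add x c) (add x c) = add x c) by (rewrite HA, <- (HA x c x), <- HA, <- Hx; reflexivity).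
  assert (cf : add c (add x c) = c) by (rewrite HA; symmetry; exact Hx).
  destruct (Hg add mul HA QCR JS (add x c) (add s c) ff) as [r [_ [Hr _]]].
  exists (add c r).
  assert (B : add (add (add x c) (add s c)) (add x c) = add (add (add x c) s) c)
    by (rewrite <- (HA (add x c) (add s c) (add x c)), <- (HA s c (add x c)), cf, HA; reflexivity).
  rewrite B in Hr.
  transitivity (add c (add (add (add (add x c) s) c) r)); [rewrite Hr; symmetry; exact cf|].
  rewrite !HA. rewrite <- Hx. reflexivity.
Qed.

Lemma Lstab {T : Type} (add mul : T -> T -> T)
  (HA : forall a b c, add a (add b c) = add (add a b) c)
  (QCR : quasi_completely_regular add mul full)
  (JS : forall a b, Jstarplus add full a b) c x s :
  c = add (add c x) c -> exists t, c = add (add t s) c.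
Proof.
  intros Hx.
  assert (gg : add (add c x) (add c x) = add c x) by (rewrite HA, <- Hx; reflexivity).
  assert (gc : add (add c x) c = c) by (symmetry; exact Hx).
  destruct (Hg add mul HA QCR JS (add c x) (add c s) gg) as [r [r' [_ Hr]]].
  exists (add r' c).
  assert (B : add (add (add c x) (add c s)) (add c x) = add (add c s) (add c x))
    by (rewrite (HA (add c x) c s), gc; reflexivity).
  rewrite B in Hr.
  transitivity (add (add r' (add (add c s) (add c x))) c); [rewrite Hr; symmetry; exact gc|].
  rewrite !HA. rewrite <- (HA (add (add r' c) s) c x), <- (HA (add (add r' c) s) (add c x) c), <- Hx. reflexivity.
Qed.


Lemma idR {T : Type} (add mul : T -> T -> T)
  (HA : forall a b c, add a (add b c) = add (add a b) c)
  (QCR : quasi_completely_regular add mul full)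
  (JS : forall a b, Jstarplus add full a b) a s :
  add_regular add full a -> add_regular add full (add a s).
Proof.
  intros [x [_ Hx]]. destruct (Rstab add mul HA QCR JS a x s Hx) as [t Ht].
  exists (add t x). split; [exact I|].
  rewrite (HA (add a s) t x), <- Ht, (HA (add a x) a s), <- Hx. reflexivity.
Qed.

Lemma idL {T : Type} (add mul : T -> T -> T)
  (HA : forall a b c, add a (add b c) = add (add a b) c)
  (QCR : quasi_completely_regular add mul full)
  (JS : forall a b, Jstarplus add full a b) a s :
  add_regular add full a -> add_regular add full (add s a).
Proof.
  intros [x [_ Hx]]. destruct (Lstab add mul HA QCR JS a x s Hx) as [t Ht].
  exists (add x t). split; [exact I|].
  rewrite <- (HA (add s a) (add x t) (add s a)), <- (HA x t (add s a)), (HA t s a), <- Ht.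
  rewrite <- (HA s a (add x a)), (HA a x a), <- Hx. reflexivity.
Qed.

Lemma mR {T : Type} (add mul : T -> T -> T)
  (HDr : forall a b c, mul (add b c) a = add (mul b a) (mul c a)) a s :
  add_regular add full a -> add_regular add full (mul a s).
Proof.
  intros [x [_ Hx]]. exists (mul x s). split; [exact I|].
  rewrite Hx at 1. rewrite !HDr. reflexivity.
Qed.

Lemma mL {T : Type} (add mul : T -> T -> T)
  (HDl : forall a b c, mul a (add b c) = add (mul a b) (mul a c)) a s :
  add_regular add full a -> add_regular add full (mul s a).
Proof.
  intros [x [_ Hx]]. exists (mul s x). split; [exact I|].
  rewrite Hx at 1. rewrite !HDl. reflexivity.
Qed.

Lemma CRK {T : Type} (add mul : T -> T -> T)
  (HA : forall a b c, add a (add b c) = add (add a b) c)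
  (HDl : forall a b c, mul a (add b c) = add (mul a b) (mul a c))
  (HDr : forall a b c, mul (add b c) a = add (mul b a) (mul c a))
  (QCR : quasi_completely_regular add mul full)
  (JS : forall a b, Jstarplus add full a b) a :
  add_regular add full a -> completely_regular add mul (add_regular add full) a.
Proof.
  intros [x0 [_ Hx0]].
  destruct (QCR a I) as [n [Hn [z [_ [H1 [H2 H3]]]]]].
  assert (kk : add (add (nsum add n a) z) (add (nsum add n a) z) = add (nsum add n a) z)
    by (rewrite HA, <- H1; reflexivity).
  remember (add (nsum add n a) z) as k eqn:Ek.
  assert (Hw : exists w w', k = add a w /\ k = add w' a).
  { destruct n as [|m]; [lia|]. destruct m as [|m].
    - exists z, z. cbn [nsum] in *. split; [exact Ek|exact H2].
    - exists (add (nsum add (S m) a) z), (add z (nsum add (S m) a)). split.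
      + rewrite Ek, HA, <- (nsum_Sl add HA) by lia. reflexivity.
      + rewrite H2, <- HA, <- (nsum_S add) by lia. reflexivity. }
  destruct Hw as [w [w' [Ew Ew']]].
  destruct (Rstab add mul HA QCR JS a x0 w Hx0) as [t Ht].
  destruct (Lstab add mul HA QCR JS a x0 w' Hx0) as [t' Ht'].
  rewrite <- Ew in Ht. rewrite <- HA, <- Ew' in Ht'.
  assert (ka : add k a = a) by (rewrite Ht at 1; rewrite HA, kk; symmetry; exact Ht).
  assert (ak : add a k = a) by (rewrite Ht' at 1; rewrite <- HA, kk; symmetry; exact Ht').
  assert (ay : add a (add k w) = k) by (rewrite HA, ak; symmetry; exact Ew).
  assert (ya : add (add k w) a = k).
  { rewrite Ew' at 1. rewrite <- (HA w' a w), <- Ew, <- HA, ka. symmetry; exact Ew'. }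
  exists (add k w). split; [|split; [|split]].
  - exists a. split; [exact I|]. rewrite ya, HA, kk. reflexivity.
  - rewrite ay. symmetry; exact ka.
  - rewrite ay, ya. reflexivity.
  - rewrite ay.
    assert (tt : add (mul a k) (mul a k) = mul a k) by (rewrite <- HDl, kk; reflexivity).
    rewrite <- (nsum_idem add (mul a k) tt n), <- (nsum_mul add mul HDr). exact H3.
Qed.

Lemma JK {T : Type} (add mul : T -> T -> T)
  (HA : forall a b c, add a (add b c) = add (add a b) c)
  (QCR : quasi_completely_regular add mul full)
  (JS : forall a b, Jstarplus add full a b) a b y :
  add_regular add full a -> add_regular add full b ->
  in_Jideal add (add_regular add full) a y -> in_Jideal add (add_regular add full) b y.
Proof.
  intros Ha Hb Hy.
  assert (HUV : exists U V, add_regular add full U /\ add_regular add full V /\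
                            a = add (add U b) V).
  { destruct (F2 add HA JS a b Ha Hb) as [u [v Huv]].
    pose proof Ha as [x [_ Hx]].
    exists (add (add a x) u), (add v (add x a)). split; [|split].
    - apply (idR add mul HA QCR JS). apply (idR add mul HA QCR JS). exact Ha.
    - apply (idL add mul HA QCR JS). apply (idL add mul HA QCR JS). exact Ha.
    - assert (E : a = add (add (add a x) (add (add u b) v)) (add x a)).
      { rewrite <- Huv. rewrite HA. rewrite <- Hx. exact Hx. }
      rewrite E at 1. rewrite !HA. reflexivity. }
  destruct HUV as [U [V [HU [HV Ea]]]].
  right; right; right.
  destruct Hy as [H|[[u [Hu H]]|[[v [Hv H]]|[u [v [Hu [Hv H]]]]]]]; subst y.
  - exists U, V. split; [exact HU|split; [exact HV|exact Ea]].
  - exists (add u U), V. split; [apply (idR add mul HA QCR JS); exact Hu|split; [exact HV|]].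
    rewrite Ea at 1. rewrite !HA. reflexivity.
  - exists U, (add V v). split; [exact HU|split; [apply (idR add mul HA QCR JS); exact HV|]].
    rewrite Ea at 1. rewrite !HA. reflexivity.
  - exists (add u U), (add V v). split; [apply (idR add mul HA QCR JS); exact Hu|split; [apply (idR add mul HA QCR JS); exact HV|]].
    rewrite Ea at 1. rewrite !HA. reflexivity.
Qed.

Lemma backward {T : Type} (add mul : T -> T -> T) :
  is_semiring add mul ->
  completely_archimedean add mul full -> Eplus_subsemigroup add full ->
  exists K, nil_extension add mul K /\ rectangular_skew_ring add mul K.
Proof.
  intros [HA [_ [HDl HDr]]] [QCR JS0] Hes.
  assert (JS : forall a b, Jstarplus add full a b) by (intros; apply JS0; exact I).
  exists (add_regular add full).
  assert (Sub : subsemiring add mul (add_regular add full)).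
  { intros a b Ha Hb. split; [apply (idR add mul HA QCR JS); exact Ha|apply (mR add mul HDr); exact Ha]. }
  split; [split; [exact Sub|split]|split; [exact Sub|split; [split|]]].
  - intros a x Ha. split; [|split; [|split]].
    + apply (idR add mul HA QCR JS); exact Ha.
    + apply (idL add mul HA QCR JS); exact Ha.
    + apply (mR add mul HDr); exact Ha.
    + apply (mL add mul HDl); exact Ha.
  - intros a. destruct (QCR a I) as [n [Hn [x [_ [Hx _]]]]].
    exists n. split; [exact Hn|]. exists x. split; [exact I|exact Hx].
  - intros a Ha. apply (CRK add mul HA HDl HDr QCR JS); exact Ha.
  - intros a b Ha Hb y. split; intros Hy.
    + apply (JK add mul HA QCR JS a b); assumption.
    + apply (JK add mul HA QCR JS b a); assumption.
  - intros e f _ _ He Hf. apply Hes; first [exact I | assumption].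
Qed.

Lemma Jweak {T : Type} (add : T -> T -> T) (P : T -> Prop) a y :
  in_Jideal add P a y -> in_Jideal add full a y.
Proof.
  intros [H|[[u [_ H]]|[[v [_ H]]|[u [v [_ [_ H]]]]]]].
  - left; exact H.
  - right; left; exists u; split; [exact I|exact H].
  - right; right; left; exists v; split; [exact I|exact H].
  - right; right; right; exists u, v; split; [exact I|split; [exact I|exact H]].
Qed.

Lemma forward {T : Type} (add mul : T -> T -> T) :
  is_semiring add mul ->
  (exists K, nil_extension add mul K /\ rectangular_skew_ring add mul K) ->
  completely_archimedean add mul full /\ Eplus_subsemigroup add full.
Proof.
  intros [HA [_ [HDl HDr]]] [K [[KSub [KBi KNil]] [_ [[KCR KJ] KEs]]]].
  assert (regK : forall a x, a = add (add a x) a -> K a).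
  { intros a x Hx.
    assert (Ey : a = add a (add x a)) by (rewrite HA; exact Hx).
    assert (En : forall n, 0 < n -> a = add a (nsum add n (add x a))).
    { intros n. induction n as [|n IH]; intros Hn; [lia|].
      destruct n as [|n]; [exact Ey|].
      rewrite nsum_S by lia. rewrite HA, <- IH by lia. exact Ey. }
    destruct (KNil (add x a)) as [n [Hn Kn]].
    destruct (KBi _ a Kn) as [_ [H _]]. rewrite <- En in H by exact Hn. exact H. }
  assert (crreg : forall a, K a -> add_regular add full a).
  { intros a Ka. destruct (KCR a Ka) as [x [_ [Hx _]]]. exists x. split; [exact I|exact Hx]. }
  assert (regKr : forall a, add_regular add full a -> K a).
  { intros a [x [_ Hx]]. exact (regK a x Hx). }
  assert (Jf : forall p q y, K p -> K q -> Jplus add K p q ->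
                 in_Jideal add full p y -> in_Jideal add full q y).
  { intros p q y Kp Kq HJ Hy.
    assert (Hqp : in_Jideal add full q p)
      by (apply (Jweak add K); apply (HJ p); left; reflexivity).
    destruct (crreg q Kq) as [xq [_ Hxq]]. destruct (crreg p Kp) as [xp [_ Hxp]].
    destruct (Jreg add HA q xq p Hxq Hqp) as [u [v Huv]].
    destruct (Jreg add HA p xp y Hxp Hy) as [u' [v' Huv']].
    right; right; right. exists (add u' u), (add v v'). split; [exact I|split; [exact I|]].
    rewrite Huv', Huv. rewrite !HA. reflexivity. }
  split; [split|].
  - intros a _. destruct (KNil a) as [n [Hn Kn]].
    destruct (KCR _ Kn) as [x [_ Hx]]. exists n. split; [exact Hn|]. exists x. split; [exact I|exact Hx].
  - intros a b _ _.
    destruct (least_pos (fun k => add_regular add full (nsum add k a))) as [m [Hm [Qm Mm]]].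
    { destruct (KNil a) as [n [Hn Kn]]. exists n. split; [exact Hn|exact (crreg _ Kn)]. }
    destruct (least_pos (fun k => add_regular add full (nsum add k b))) as [n [Hn [Qn Mn]]].
    { destruct (KNil b) as [n [Hn Kn]]. exists n. split; [exact Hn|exact (crreg _ Kn)]. }
    exists m, n. split; [split; [exact Hm|split; [exact Qm|exact Mm]]|].
    split; [split; [exact Hn|split; [exact Qn|exact Mn]]|].
    pose proof (regKr _ Qm) as Km. pose proof (regKr _ Qn) as Kn.
    intros y. split; intros Hy.
    + exact (Jf _ _ y Km Kn (KJ _ _ Km Kn) Hy).
    + exact (Jf _ _ y Kn Km (KJ _ _ Kn Km) Hy).
  - intros e f _ _ He Hf.
    apply KEs; [apply (regK e e); now rewrite !He|apply (regK f f); now rewrite !Hf|exact He|exact Hf].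
Qed.

Theorem theorem3p5 (S : Type) (add mul : S -> S -> S) :
  is_semiring add mul ->
  ((exists K : S -> Prop,
       nil_extension add mul K /\ rectangular_skew_ring add mul K)
   <->
   (completely_archimedean add mul full /\ Eplus_subsemigroup add full)).
Proof.
  intros Hs. split.
  - apply forward; exact Hs.
  - intros [H1 H2]. apply backward; assumption.
Qed.
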